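(* Let $n$ be a positive integer and let $a\in\mathcal{T}_n$ have rank $n-1$. Then $\mu(\mathcal{T}_n^a)=n+1$.
   Context: For a positive integer $m$, $\mathcal{T}_m$ is the semigroup of all functions $\{1,\ldots,m\}\to\{1,\ldots,m\}$ under composition; $\operatorname{rank}(f)=|\operatorname{im}(f)|$. For a semigroup $S$ and $a\in S$, the variant $S^a$ is the set $S$ with operation $x\star_a y=xay$. For a finite semigroup $S$, the minimal degree $\mu(S)$ is the least positive integer $m$ such that $S$ embeds (via an injective homomorphism) in $\mathcal{T}_m$. *)

(* Defs.v *)
From mathcomp Require Import all_boot.
Set Implicit Arguments. Unset Strict Implicit. Unset Printing Implicit Defensive.

(* Convention: (f * g)(x) = f (g x).  (Using the other convention
   consistently throughout yields the same minimal degrees.) *)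
Definition Tmap (m : nat) := {ffun 'I_m -> 'I_m}.

Definition tmul (m : nat) (f g : Tmap m) : Tmap m := [ffun x => f (g x)].

Definition trank (m : nat) (f : Tmap m) : nat := #|[set f x | x in 'I_m]|.

Definition variant_op (m : nat) (a : Tmap m) (x y : Tmap m) : Tmap m :=
  tmul (tmul x a) y.

Definition embeds_in_T (S : Type) (op : S -> S -> S) (m : nat) : Prop :=
  exists phi : S -> Tmap m,
    injective phi /\ forall x y, phi (op x y) = tmul (phi x) (phi y).

Definition minimal_degree_is (S : Type) (op : S -> S -> S) (d : nat) : Prop :=
  0 < d /\ embeds_in_T op d /\
  forall m, 0 < m -> embeds_in_T op m -> d <= m.

(* Main.v *)
Require Import Defs.
From mathcomp Require Import all_boot.

Lemma lower_bound (n m : nat) (a : Tmap n) :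
  0 < n -> trank a = n.-1 -> 0 < m -> embeds_in_T (variant_op a) m -> n.+1 <= m.
Proof.
move=> n0 ra m0 [phi [inj hom]].
rewrite ltnNge; apply/negP => mn.
have cardle : #|{ffun 'I_n -> 'I_n}| <= #|{ffun 'I_m -> 'I_m}|.
  by have := leq_card _ inj.
rewrite !card_ffun !card_ord in cardle.
have em : m = n.
  apply/eqP; rewrite eqn_leq mn /=; rewrite leqNgt; apply/negP => lt.
  have h1 : m ^ m < n ^ m by rewrite ltn_exp2r.
  have h2 : n ^ m <= n ^ n by rewrite leq_exp2l // (leq_trans _ lt) // -(ltnS 1) ltnS (leq_trans _ lt) // .
  by move: (leq_trans (leq_trans h1 h2) cardle); rewrite ltnn.
subst m.
have [psi phiK psiK] := injF_bij inj.
set e := psi [ffun x => x].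
have ee : phi e = [ffun x => x] by rewrite /e psiK.
have key : forall y, variant_op a e y = y.
  move=> y; apply: inj; rewrite hom ee; apply/ffunP => x; by rewrite !ffunE.
have inja : injective a.
  move=> x1 x2 h.
  have := key [ffun x => x].
  move/ffunP => k; move: (k x1) (k x2); rewrite /variant_op /tmul !ffunE /= h.
  by move=> h1 h2; exact: (etrans (esym h1) h2).
move: ra; rewrite /trank card_imset // card_ord => h.
by case: (n) n0 h => // k _ /= E; move: (ltnSn k); rewrite -{1}E ltnn.
Qed.

Theorem proposition4p3 (n : nat) (a : Tmap n) :
  0 < n -> trank a = n.-1 ->
  minimal_degree_is (variant_op a) n.+1.
Proof.
move=> n0 ra; split => //; split; last first.
  by move=> m m0 H; apply: lower_bound H.
set imA := [set a x | x in 'I_n].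
have [z zP|none] := pickP (fun z => z \notin imA); last first.
  exfalso.
  have : [set: 'I_n] \subset imA by apply/subsetP => x _; move: (none x) => /= /negbFE.
  move/subset_leq_card; rewrite cardsT card_ord.
  move: ra; rewrite /trank -/imA => ->.
  by case: (n) n0 => // k _ /=; rewrite ltnn.
have cover : forall w, w = z \/ w \in imA.
  move=> w.
  have : z |: imA == [set: 'I_n].
    rewrite eqEcard subsetT cardsU1 (zP : z \notin imA) cardsT card_ord.
    move: ra; rewrite /trank -/imA => ->.
    by rewrite /= add1n prednK.
  move/eqP => E.
  have : w \in z |: imA by rewrite E inE.
  by rewrite in_setU1 => /orP [/eqP ->|]; [left|right].
pose phi (x : Tmap n) : Tmap n.+1 :=
  [ffun i : 'I_n.+1 => lift ord_max (match unlift ord_max i with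
                                       | Some j => x (a j) | None => x z end)].
exists phi; split.
  move=> x y /ffunP E; apply/ffunP => w.
  case: (cover w) => [->|].
    move: (E ord_max); rewrite !ffunE unlift_none.
    by move/lift_inj.
  case/imsetP => j _ ->.
  move: (E (lift ord_max j)); rewrite !ffunE liftK.
  by move/lift_inj.
move=> x y; apply/ffunP => i.
rewrite /phi /variant_op /tmul !ffunE.
case: (unlift ord_max i) => [j|]; by rewrite liftK ?ffunE.
Qed.
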